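(* Let $R$ be an integral domain and $\star$ a star operation on $R$. Every $\star$-invertible nonzero ideal $I$ of $R$ (i.e. $(II^{-1})^{\star}=R$) is $\star$-basic, and every nonzero ideal $I$ with $(I^2)^{\star}=I^{\star}$ is $\star$-basic.
   Context: Let $R$ be a domain with quotient field $K$ and $\mathcal F(R)$ its set of nonzero fractional ideals. A star operation is a map $I\mapsto I^\star$ on $\mathcal F(R)$ such that for all nonzero $a\in K$ and $I,J\in\mathcal F(R)$: $(aI)^\star=aI^\star$, $R^\star=R$; $I\subseteq I^\star$, and $I\subseteq J$ implies $I^\star\subseteq J^\star$; $I^{\star\star}=I^\star$. Here $I^{-1}=(R:I)=\{x\in K: xI\subseteq R\}$. For a nonzero ideal $I$, an ideal $J\subseteq I$ is a $\star$-reduction of $I$ if $(JI^n)^\star=(I^{n+1})^\star$ for some integer $n\ge 0$; it is a trivial $\star$-reduction if $J^\star=I^\star$. $I$ is $\star$-basic if every $\star$-reduction of $I$ is trivial. *)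

(* Defs.v *)
(* The quotient field K of the domain R is mathcomp's
   {fraction R}; subsets of K are Prop-valued predicates K -> Prop. *)
From HB Require Import structures.
From mathcomp Require Import all_boot all_order all_algebra fraction.
Set Implicit Arguments. Unset Strict Implicit. Unset Printing Implicit Defensive.
Import Order.TTheory GRing.Theory.
Local Open Scope ring_scope.

Section StarDefs.
Variable R : idomainType.
Local Notation K := {fraction R}.
Local Notation "x %:F" := (@FracField.tofrac R x).

Definition fset := K -> Prop.

Definition inR : fset := fun x => exists r : R, x = r%:F.

Definition fsubset (A B : fset) : Prop := forall x, A x -> B x.
Definition fseteq (A B : fset) : Prop := forall x, A x <-> B x.

Definition frac_ideal (I : fset) : Prop :=
  [/\ I 0,
      (forall x y, I x -> I y -> I (x + y)),
      (forall r x, inR r -> I x -> I (r * x)),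
      (exists x, I x /\ x != 0) &
      (exists d : R, d != 0 /\ forall x, I x -> inR (d%:F * x))].

Definition nz_ideal (I : fset) : Prop := frac_ideal I /\ fsubset I inR.

Definition fscale (a : K) (I : fset) : fset := fun x => exists y, I y /\ x = a * y.

Definition ideal_prod (I J : fset) : fset :=
  fun x => exists n (f g : 'I_n -> K),
    (forall k, I (f k)) /\ (forall k, J (g k)) /\ x = \sum_(k < n) f k * g k.

Fixpoint ideal_pow (I : fset) (n : nat) : fset :=
  match n with 0 => inR | m.+1 => ideal_prod I (ideal_pow I m) end.

Definition ideal_inv (I : fset) : fset := fun x => forall y, I y -> inR (x * y).

Definition is_star (st : fset -> fset) : Prop :=
  (forall I, frac_ideal I -> frac_ideal (st I)) /\
  [/\ (forall a I, a != 0 -> frac_ideal I -> fseteq (st (fscale a I)) (fscale a (st I))),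
      fseteq (st inR) inR,
      (forall I, frac_ideal I -> fsubset I (st I)),
      (forall I J, frac_ideal I -> frac_ideal J -> fsubset I J -> fsubset (st I) (st J)) &
      (forall I, frac_ideal I -> fseteq (st (st I)) (st I))].

Definition star_reduction (st : fset -> fset) (J I : fset) : Prop :=
  nz_ideal J /\ fsubset J I /\
  exists n : nat, fseteq (st (ideal_prod J (ideal_pow I n))) (st (ideal_pow I n.+1)).

Definition star_basic (st : fset -> fset) (I : fset) : Prop :=
  forall J, star_reduction st J I -> fseteq (st J) (st I).

End StarDefs.

(* Main.v *)
Require Import Defs.
From HB Require Import structures.
From mathcomp Require Import all_boot all_order all_algebra fraction.
From Stdlib Require Import FunctionalExtensionality PropExtensionality.
Set Implicit Arguments. Unset Strict Implicit. Unset Printing Implicit Defensive.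
Import GRing.Theory.
Local Open Scope ring_scope.

Section Helpers.
Variable R : idomainType.
Local Notation K := {fraction R}.
Local Notation "x %:F" := (@FracField.tofrac R x).
Implicit Types A B C : fset R.

Lemma fext A B : fseteq A B -> A = B.
Proof.
move=> H; apply: functional_extensionality => x.
by apply: propositional_extensionality.
Qed.

Lemma fext2 A B : fsubset A B -> fsubset B A -> A = B.
Proof. by move=> H1 H2; apply: fext => x; split; [apply: H1|apply: H2]. Qed.

Lemma inR0 : @inR R 0.
Proof. by exists 0; rewrite tofrac0. Qed.
Lemma inR1 : @inR R 1.
Proof. by exists 1; rewrite tofrac1. Qed.
Lemma inRD x y : @inR R x -> @inR R y -> @inR R (x + y).
Proof. by move=> [a ->] [b ->]; exists (a + b); rewrite tofracD. Qed.
Lemma inRM x y : @inR R x -> @inR R y -> @inR R (x * y).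
Proof. by move=> [a ->] [b ->]; exists (a * b); rewrite tofracM. Qed.
Lemma inRF (r : R) : @inR R r%:F.
Proof. by exists r. Qed.

Lemma sum_closed (P : fset R) : P 0 -> (forall x y, P x -> P y -> P (x + y)) ->
  forall n (F : 'I_n -> K), (forall k, P (F k)) -> P (\sum_(k < n) F k).
Proof. by move=> P0 PD n F PF; apply: (big_ind P) => // k _. Qed.

Lemma frac_inR : frac_ideal (@inR R).
Proof.
split.
- exact: inR0.
- exact: inRD.
- exact: inRM.
- by exists 1; split; [exact: inR1 | exact: oner_neq0].
- by exists 1; split; [exact: oner_neq0 | move=> x Hx; rewrite tofrac1 mul1r].
Qed.

Lemma prod_single A B a b : A a -> B b -> ideal_prod A B (a * b).
Proof.
move=> Ha Hb; exists 1%N, (fun _ => a), (fun _ => b); split => //; split => //.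
by rewrite big_ord1.
Qed.

Lemma prod0 A B : ideal_prod A B 0.
Proof.
exists 0%N, (fun _ => 0), (fun _ => 0); split; first by case.
split; first by case.
by rewrite big_ord0.
Qed.

Lemma prodD A B x y : ideal_prod A B x -> ideal_prod A B y -> ideal_prod A B (x + y).
Proof.
move=> [n1 [f1 [g1 [Hf1 [Hg1 ->]]]]] [n2 [f2 [g2 [Hf2 [Hg2 ->]]]]].
exists (n1 + n2)%N,
  (fun k => match split k with inl i => f1 i | inr j => f2 j end),
  (fun k => match split k with inl i => g1 i | inr j => g2 j end).
split; first by move=> k; case: (split k).
split; first by move=> k; case: (split k).
rewrite big_split_ord /=; congr (_ + _); apply: eq_bigr => i _.
- by have := @unsplitK n1 n2 (inl i) => /= ->.
- by have := @unsplitK n1 n2 (inr i) => /= ->.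
Qed.

Lemma prod_ind A B (S : fset R) : S 0 -> (forall x y, S x -> S y -> S (x + y)) ->
  (forall a b, A a -> B b -> S (a * b)) -> fsubset (ideal_prod A B) S.
Proof.
move=> S0 SD SM x [n [f [g [Hf [Hg ->]]]]].
by apply: sum_closed => // k; apply: SM.
Qed.

Lemma frac_prod A B : frac_ideal A -> frac_ideal B -> frac_ideal (ideal_prod A B).
Proof.
move=> [A0 AD AM [a [Ha a0]] [dA [dA0 HdA]]] [B0 BD BM [b [Hb b0]] [dB [dB0 HdB]]].
split.
- exact: prod0.
- exact: prodD.
- move=> r x Hr; apply: (prod_ind (S := fun x => ideal_prod A B (r * x))).
  + by rewrite mulr0; apply: prod0.
  + by move=> x1 y1 H1 H2; rewrite mulrDr; apply: prodD.
  + by move=> a1 b1 Ha1 Hb1; rewrite mulrA; apply: prod_single => //; apply: AM.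
- by exists (a * b); split; [apply: prod_single | apply: mulf_neq0].
- exists (dA * dB); split; first by apply: mulf_neq0.
  apply: (prod_ind (S := fun x => @inR R ((dA * dB)%:F * x))).
  + by rewrite mulr0; apply: inR0.
  + by move=> x1 y1 H1 H2; rewrite mulrDr; apply: inRD.
  + move=> a1 b1 Ha1 Hb1.
    have -> : (dA * dB)%:F * (a1 * b1) = (dA%:F * a1) * (dB%:F * b1).
      by rewrite tofracM -!mulrA; congr (_ * _); rewrite mulrCA.
    by apply: inRM; [apply: HdA | apply: HdB].
Qed.

Lemma prod_comm A B : ideal_prod A B = ideal_prod B A.
Proof.
by apply: fext2; apply: prod_ind; [exact: prod0 | exact: prodD |
  move=> a b Ha Hb; rewrite mulrC; apply: prod_single |
  exact: prod0 | exact: prodD |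
  move=> a b Ha Hb; rewrite mulrC; apply: prod_single].
Qed.

Lemma prod_mono A A' B B' : fsubset A A' -> fsubset B B' ->
  fsubset (ideal_prod A B) (ideal_prod A' B').
Proof.
move=> HA HB; apply: prod_ind; [exact: prod0 | exact: prodD |].
by move=> a b Ha Hb; apply: prod_single; [apply: HA | apply: HB].
Qed.

Lemma prod_assoc A B C :
  ideal_prod (ideal_prod A B) C = ideal_prod A (ideal_prod B C).
Proof.
apply: fext2; apply: prod_ind; try exact: prod0; try exact: prodD.
- move=> x c Hx Hc.
  apply: (prod_ind (S := fun x => ideal_prod A (ideal_prod B C) (x * c))) Hx.
  + by rewrite mul0r; apply: prod0.
  + by move=> x1 y1 H1 H2; rewrite mulrDl; apply: prodD.
  + by move=> a b Ha Hb; rewrite -mulrA; apply: prod_single => //; apply: prod_single.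
- move=> a x Ha Hx.
  apply: (prod_ind (S := fun x => ideal_prod (ideal_prod A B) C (a * x))) Hx.
  + by rewrite mulr0; apply: prod0.
  + by move=> x1 y1 H1 H2; rewrite mulrDr; apply: prodD.
  + by move=> b c Hb Hc; rewrite mulrA; apply: prod_single => //; apply: prod_single.
Qed.

Lemma prod_R A : frac_ideal A -> ideal_prod A (@inR R) = A.
Proof.
move=> [A0 AD AM _ _]; apply: fext2.
- apply: prod_ind => // a b Ha Hb; rewrite mulrC; exact: AM.
- by move=> a Ha; rewrite -[a]mulr1; apply: prod_single => //; apply: inR1.
Qed.

Lemma prod_sub A B : frac_ideal A -> fsubset B (@inR R) -> fsubset (ideal_prod A B) A.
Proof.
move=> HA HB x Hx; rewrite -(prod_R HA).
by apply: (prod_mono (A := A) _ HB) => //.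
Qed.

Lemma frac_inv (I : fset R) : nz_ideal I -> frac_ideal (ideal_inv I).
Proof.
move=> [[I0 ID IM [x0 [Hx0 x00]] _] IR].
split.
- by move=> y _; rewrite mul0r; apply: inR0.
- by move=> x y Hx Hy z Hz; rewrite mulrDl; apply: inRD; [apply: Hx | apply: Hy].
- by move=> r x Hr Hx z Hz; rewrite -mulrA; apply: inRM => //; apply: Hx.
- exists 1; split; last exact: oner_neq0.
  by move=> y Hy; rewrite mul1r; apply: IR.
- have [r0 Er0] := IR _ Hx0.
  exists r0; split.
    by apply: contra x00; rewrite Er0 => /eqP ->; rewrite tofrac0.
  by move=> x Hx; rewrite -Er0 mulrC; apply: Hx.
Qed.

Lemma frac_scale (a : K) (d : R) B : a != 0 -> d != 0 -> @inR R (d%:F * a) ->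
  frac_ideal B -> frac_ideal (fscale a B).
Proof.
move=> a0 d0 Hda [B0 BD BM [b [Hb b0]] [dB [dB0 HdB]]].
split.
- by exists 0; rewrite mulr0.
- by move=> x y [u [Hu ->]] [v [Hv ->]]; exists (u + v); rewrite mulrDr; split => //; apply: BD.
- by move=> r x Hr [u [Hu ->]]; exists (r * u); rewrite mulrCA; split => //; apply: BM.
- by exists (a * b); split; [exists b | apply: mulf_neq0].
- exists (d * dB); split; first by apply: mulf_neq0.
  move=> x [u [Hu ->]].
  have -> : (d * dB)%:F * (a * u) = (d%:F * a) * (dB%:F * u).
    by rewrite tofracM -!mulrA; congr (_ * _); rewrite mulrCA.
  by apply: inRM => //; apply: HdB.
Qed.

Lemma frac_pow (I : fset R) : frac_ideal I -> forall n, frac_ideal (ideal_pow I n).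
Proof. by move=> HI; elim=> [|n IH] /=; [exact: frac_inR | exact: frac_prod]. Qed.

Variable st : fset R -> fset R.
Hypothesis Hst : is_star st.

Lemma star_lem A B : frac_ideal A -> frac_ideal B ->
  st (ideal_prod A (st B)) = st (ideal_prod A B).
Proof.
case: Hst => Hfr [Hsc HR Hext Hmono Hidem] HA HB.
have HAB := frac_prod HA HB.
have HAsB := frac_prod HA (Hfr _ HB).
apply: fext2; last first.
  by apply: (Hmono) => //; apply: prod_mono => //; apply: Hext.
move=> x Hx; apply/(Hidem _ HAB); move: x Hx; apply: (Hmono) => //; first exact: (Hfr).
have [S0 SD _ _ _] := Hfr _ HAB.
apply: prod_ind => // a b Ha Hb.
have [a0|a0] := eqVneq a 0; first by rewrite a0 mul0r.
have [_ _ _ _ [dA [dA0 HdA]]] := HA.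
have Hsc' := frac_scale a0 dA0 (HdA _ Ha) HB.
have : st (fscale a B) (a * b) by apply/(Hsc _ _ a0 HB); exists b.
apply: (Hmono) => //.
by move=> y [u [Hu ->]]; apply: prod_single.
Qed.

End Helpers.

Theorem lemma1p2 (R : idomainType) (st : fset R -> fset R) (Hst : is_star st)
  (I : fset R) (HI : nz_ideal I) :
  (fseteq (st (ideal_prod I (ideal_inv I))) (@inR R) -> star_basic st I) /\
  (fseteq (st (ideal_pow I 2)) (st I) -> star_basic st I).
Proof.
have Hst' := Hst.
case: Hst' => Hfr [Hsc HR Hext Hmono Hidem].
have HIf := HI.1.
have HIR := HI.2.
split.
- move=> /fext H.
  have HIi := frac_inv HI.
  have key : forall A, frac_ideal A ->
      st A = st (ideal_prod (ideal_inv I) (st (ideal_prod A I))).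
    move=> A HA.
    rewrite (star_lem Hst HIi (frac_prod HA HIf)) (prod_comm (ideal_inv I)) prod_assoc.
    rewrite -(star_lem Hst HA (frac_prod HIf HIi)) H.
    by rewrite (prod_R HA).
  have cancel : forall A B, frac_ideal A -> frac_ideal B ->
      st (ideal_prod A I) = st (ideal_prod B I) -> st A = st B.
    by move=> A B HA HB E; rewrite (key _ HA) (key _ HB) E.
  move=> J [HJ [HJI [n Hn]]].
  have HJf := HJ.1.
  move/fext: Hn => /=.
  elim: n {HJI} => [|n IH] /=.
    by rewrite (prod_R HJf) (prod_R HIf) => ->.
  rewrite (prod_comm I (ideal_pow I n)) -!prod_assoc => E.
  have E' := cancel _ _ (frac_prod HJf (frac_pow HIf n))
     (frac_prod HIf (frac_pow HIf n)) E.
  exact: IH E'.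
- move=> /fext /=; rewrite (prod_R HIf) => H.
  have powst : forall m, st (ideal_pow I m.+1) = st I.
    elim=> [|m IH] /=; first by rewrite (prod_R HIf).
    rewrite -(star_lem Hst HIf (frac_pow HIf m.+1)) IH.
    by rewrite (star_lem Hst HIf HIf).
  move=> J [HJ [HJI [n Hn]]].
  have HJf := HJ.1.
  move/fext: Hn.
  case: n => [|m].
    by rewrite /= (prod_R HJf) (prod_R HIf) => ->.
  rewrite (powst m.+1) -(star_lem Hst HJf (frac_pow HIf m.+1)) (powst m).
  rewrite (star_lem Hst HJf HIf) => E.
  have H1 : st J = st I.
    apply: fext2.
    - by apply: (Hmono) => //; exact: HJI.
    - rewrite -E; apply: (Hmono); [exact: frac_prod | exact: HJf |].
      by apply: prod_sub.
  by rewrite H1.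
Qed.
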